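(* Let $\sigma\colon\Sigma\to\Sigma$ be a two-sided subshift of finite type, $0<\theta<1$, $f\colon\Sigma\to\mathbb R$ Lipschitz w.r.t. $d_\theta$, and $F(x,r)=(\sigma x,r+f(x))$ on $\Sigma\times\mathbb R$. Let $K\subset\Sigma\times\mathbb R$ be compact with $\overline{\operatorname{int}(K)}=K$. If $p\in\Sigma\times\mathbb R$ satisfies $K\subset AC(p)$, then there is $N$ such that $K\subset AC_N(p)$.
   Context: $d_\theta(x,y)=\theta^{\max\{j:\ x_i=y_i\ \forall|i|<j\}}$, $f_n=\sum_{i<n}f\circ\sigma^i$. Strong stable/unstable manifolds: $(y,s)\in W^s(x,r)$ iff $y_i=x_i$ for all sufficiently large $i$ and $s-r=\lim_n(f_n(x)-f_n(y))$; $(y,s)\in W^u(x,r)$ iff $y_i=x_i$ for all sufficiently negative $i$ and $s-r=\lim_n(f_n(\sigma^{-n}y)-f_n(\sigma^{-n}x))$. $AC(p)$ is the set of points reachable from $p$ by a finite chain of points each in $W^s$ or $W^u$ of the previous one. For $n\in\mathbb Z$ and $x\in\Sigma$: $W^s_n(x)=\{y: y_i=x_i\ \forall i\ge n\}$, $W^u_n(x)=\{y: y_i=x_i\ \forall i\le -n\}$; for points of $\Sigma\times\mathbb R$, $(y,t)\in W^s_n(x,s)$ iff $(y,t)\in W^s(x,s)$ and $y\in W^s_n(x)$, and similarly for $W^u_n$. A $us$-$N$-path from $p$ to $q$ is a sequence $p=p_0,\dots,p_k=q$ with $k\le N$ and $p_{j+1}\in W^s_N(p_j)\cup W^u_N(p_j)$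 for each $j$; $AC_N(p)$ is the set of $q$ reachable from $p$ by a $us$-$N$-path. *)

(* Defs.v *)
From Stdlib Require Import Reals ZArith List Classical ClassicalEpsilon.
Open Scope R_scope.

(* Ambient points: sequences Z -> symbols (symbols are nats < k). *)
Definition Seq := Z -> nat.
Definition Pt := (Seq * R)%type.

(* Two-sided subshift of finite type with alphabet {0,..,k-1}
   and 0-1 transition matrix A. *)
Definition inSFT (k : nat) (A : nat -> nat -> bool) (x : Seq) : Prop :=
  forall i : Z, (x i < k)%nat /\ A (x i) (x (i + 1)%Z) = true.

Definition inSFTR k A (p : Pt) : Prop := inSFT k A (fst p).

Definition agree (x y : Seq) (j : nat) : Prop :=
  forall i : Z, (Z.abs i < Z.of_nat j)%Z -> x i = y i.

(* d_theta(x,y) = theta^(max{j : x_i = y_i for all |i| < j}), = 0 if x = y. *)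
Definition dtheta (theta : R) (x y : Seq) : R :=
  match excluded_middle_informative (forall j, agree x y j) with
  | left _ => 0
  | right _ =>
      theta ^ (epsilon (inhabits 0%nat)
                 (fun j => agree x y j /\ ~ agree x y (S j)))
  end.

Definition lipschitz_theta k A (theta : R) (f : Seq -> R) : Prop :=
  exists C : R, forall x y, inSFT k A x -> inSFT k A y ->
    Rabs (f x - f y) <= C * dtheta theta x y.

Definition distP (theta : R) (p q : Pt) : R :=
  Rmax (dtheta theta (fst p) (fst q)) (Rabs (snd p - snd q)).

Definition is_openP k A theta (U : Pt -> Prop) : Prop :=
  (forall p, U p -> inSFTR k A p) /\
  forall p, U p -> exists eps, 0 < eps /\
    forall q, inSFTR k A q -> distP theta p q < eps -> U q.

Definition interiorP k A theta (S : Pt -> Prop) (p : Pt) : Prop :=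
  S p /\ inSFTR k A p /\ exists eps, 0 < eps /\
    forall q, inSFTR k A q -> distP theta p q < eps -> S q.

Definition closureP k A theta (S : Pt -> Prop) (p : Pt) : Prop :=
  inSFTR k A p /\ forall eps, 0 < eps -> exists q, S q /\ distP theta p q < eps.

Definition is_compactP k A theta (K : Pt -> Prop) : Prop :=
  (forall p, K p -> inSFTR k A p) /\
  forall (I : Type) (U : I -> Pt -> Prop),
    (forall i, is_openP k A theta (U i)) ->
    (forall p, K p -> exists i, U i p) ->
    exists l : list I, forall p, K p -> exists i, In i l /\ U i p.

Definition shift (x : Seq) : Seq := fun i => x (i + 1)%Z.
Definition shift_inv_n (n : nat) (x : Seq) : Seq := fun i => x (i - Z.of_nat n)%Z.

Fixpoint birk (f : Seq -> R) (n : nat) (x : Seq) : R :=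
  match n with
  | O => 0
  | S m => birk f m x + f (Nat.iter m shift x)
  end.

Definition Ws k A (f : Seq -> R) (p q : Pt) : Prop :=
  let (x, r) := p in let (y, s) := q in
  inSFT k A y /\
  (exists M : Z, forall i, (M <= i)%Z -> y i = x i) /\
  Un_cv (fun n => birk f n x - birk f n y) (s - r).

Definition Wu k A (f : Seq -> R) (p q : Pt) : Prop :=
  let (x, r) := p in let (y, s) := q in
  inSFT k A y /\
  (exists M : Z, forall i, (i <= M)%Z -> y i = x i) /\
  Un_cv (fun n => birk f n (shift_inv_n n y) - birk f n (shift_inv_n n x)) (s - r).

Definition Ws_n k A f (n : Z) (p q : Pt) : Prop :=
  Ws k A f p q /\ forall i, (n <= i)%Z -> fst q i = fst p i.

Definition Wu_n k A f (n : Z) (p q : Pt) : Prop :=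
  Wu k A f p q /\ forall i, (i <= - n)%Z -> fst q i = fst p i.

Inductive AC k A f (p : Pt) : Pt -> Prop :=
  | AC_refl : AC k A f p p
  | AC_step : forall q r, AC k A f p q -> (Ws k A f q r \/ Wu k A f q r) ->
      AC k A f p r.

Inductive chainN k A f (N : nat) (p : Pt) : nat -> Pt -> Prop :=
  | chainN_refl : chainN k A f N p 0 p
  | chainN_step : forall m q r, chainN k A f N p m q ->
      (Ws_n k A f (Z.of_nat N) q r \/ Wu_n k A f (Z.of_nat N) q r) ->
      chainN k A f N p (S m) r.

Definition AC_N k A f (N : nat) (p q : Pt) : Prop :=
  exists m, (m <= N)%nat /\ chainN k A f N p m q.

(* Main.v *)
Require Import Defs.
From Stdlib Require Import Reals ZArith List.
From Stdlib Require Import Lia Lra Classical ClassicalEpsilon FunctionalExtensionality.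
Open Scope R_scope.

Lemma agree_mono x y j j' : (j' <= j)%nat -> agree x y j -> agree x y j'.
Proof. unfold agree; intros H1 H2 i Hi; apply H2; lia. Qed.
Lemma agree_refl x j : agree x x j.
Proof. unfold agree; auto. Qed.
Lemma agree_sym x y j : agree x y j -> agree y x j.
Proof. unfold agree; intros H i Hi; symmetry; auto. Qed.
Lemma agree_trans x y z j : agree x y j -> agree y z j -> agree x z j.
Proof. unfold agree; intros H1 H2 i Hi; rewrite H1 by auto; auto. Qed.

Lemma agree_all_eq x y : (forall j, agree x y j) -> x = y.
Proof. intros H; apply functional_extensionality; intros i.
  apply (H (S (Z.to_nat (Z.abs i)))); lia. Qed.

Lemma pow_le1 th n : 0 <= th <= 1 -> 0 <= th ^ n <= 1.
Proof. intros H; induction n; simpl; [lra|]. split; [apply Rmult_le_pos; lra|].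
  replace 1 with (1*1) by ring. apply Rmult_le_compat; lra. Qed.

Lemma pow_le_mono th a b : 0 <= th <= 1 -> (b <= a)%nat -> th ^ a <= th ^ b.
Proof. intros Ht Hab. replace a with (b + (a - b))%nat by lia.
  rewrite pow_add. pose proof (pow_le1 th b Ht). pose proof (pow_le1 th (a-b) Ht).
  replace (th ^ b) with (th ^ b * 1) at 2 by ring. apply Rmult_le_compat_l; lra. Qed.

Lemma pow_small th : 0 < th < 1 -> forall e, 0 < e -> exists n, th ^ n < e.
Proof. intros Ht e He. destruct (pow_lt_1_zero th) with (y := e) as [N HN]; auto.
  rewrite Rabs_right; lra. exists N. specialize (HN N (le_n _)).
  rewrite Rabs_right in HN; auto. apply Rle_ge, pow_le; lra. Qed.

Lemma agree_last x y : ~ (forall j, agree x y j) -> exists j, agree x y j /\ ~ agree x y (S j).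
Proof. intros H. apply NNPP; intros H2. apply H. intros j; induction j.
  - unfold agree; intros i Hi; lia.
  - apply NNPP; intros H3; apply H2; eauto. Qed.

Lemma dtheta_nonneg th x y : 0 <= th -> 0 <= dtheta th x y.
Proof. intros; unfold dtheta; destruct excluded_middle_informative; [lra| apply pow_le; auto]. Qed.

Lemma dtheta_agree th x y L : 0 <= th <= 1 -> agree x y L -> dtheta th x y <= th ^ L.
Proof. intros Ht HL; unfold dtheta; destruct excluded_middle_informative as [a|n].
  - apply pow_le; lra.
  - pose proof (epsilon_spec (inhabits 0%nat) (fun j => agree x y j /\ ~ agree x y (S j)) (agree_last x y n)) as [E1 E2].
    apply pow_le_mono; auto.
    destruct (le_lt_dec L (epsilon (inhabits 0%nat) (fun j => agree x y j /\ ~ agree x y (S j)))); auto.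
    exfalso; apply E2; eapply agree_mono; [|exact HL]; lia. Qed.

Lemma dtheta_small th x y L : 0 < th < 1 -> dtheta th x y < th ^ L -> agree x y L.
Proof. intros Ht H; unfold dtheta in H; destruct excluded_middle_informative as [a|n]; auto.
  pose proof (epsilon_spec (inhabits 0%nat) (fun j => agree x y j /\ ~ agree x y (S j)) (agree_last x y n)) as [E1 E2].
  set (j := epsilon _ _) in *. eapply agree_mono; [|exact E1].
  destruct (le_lt_dec L j); auto. exfalso.
  assert (th ^ L <= th ^ j) by (apply pow_le_mono; [lra|lia]). lra. Qed.

Fixpoint ssum (t : nat -> R) (n : nat) : R :=
  match n with O => 0 | S m => ssum t m + t m end.

Lemma ssum_ext t t' n : (forall j, (j < n)%nat -> t j = t' j) -> ssum t n = ssum t' n.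
Proof. induction n; simpl; intros H; auto. rewrite IHn by (intros; apply H; lia). rewrite H by lia; auto. Qed.

Lemma ssum_minus t t' n : ssum (fun j => t j - t' j) n = ssum t n - ssum t' n.
Proof. induction n; simpl; [ring|]. rewrite IHn; ring. Qed.

Lemma ssum_split t n m : ssum t (n + m) = ssum t n + ssum (fun i => t (n + i)%nat) m.
Proof. induction m; simpl. rewrite Nat.add_0_r; ring. rewrite Nat.add_succ_r; simpl; rewrite IHm; ring. Qed.

Lemma ssum_abs_le a b n : (forall j, (j < n)%nat -> Rabs (a j) <= b j) -> Rabs (ssum a n) <= ssum b n.
Proof. induction n; simpl; intros H. rewrite Rabs_R0; lra.
  eapply Rle_trans; [apply Rabs_triang|]. apply Rplus_le_compat; [apply IHn; intros; apply H; lia| apply H; lia]. Qed.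

Lemma ssum_const c n : ssum (fun _ => c) n = INR n * c.
Proof. induction n; simpl ssum; [simpl; ring|]. rewrite IHn, S_INR; ring. Qed.

Lemma ssum_geom th J m : ssum (fun i => th ^ (J + i)) m * (1 - th) = th ^ J * (1 - th ^ m).
Proof. induction m; simpl ssum. simpl; ring.
  rewrite Rmult_plus_distr_r, IHm, pow_add. simpl; ring. Qed.

Lemma ssum_geom_le th J m : 0 < th < 1 -> ssum (fun i => th ^ (J + i)) m <= th ^ J / (1 - th).
Proof. intros Ht. pose proof (ssum_geom th J m). pose proof (pow_le1 th m ltac:(lra)).
  pose proof (pow_le1 th J ltac:(lra)).
  apply Rmult_le_reg_r with (1 - th); [lra|]. rewrite H. unfold Rdiv.
  rewrite Rmult_assoc, Rinv_l by lra. nra. Qed.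

Lemma ssum_scal c t n : ssum (fun j => c * t j) n = c * ssum t n.
Proof. induction n; simpl; [ring|]. rewrite IHn; ring. Qed.

Lemma tail_bound th C t n m : 0 < th < 1 -> 0 <= C -> (forall j, Rabs (t j) <= C * th ^ j) ->
  Rabs (ssum t (n + m) - ssum t n) <= C * th ^ n / (1 - th).
Proof. intros Ht HC Hb. rewrite ssum_split. replace (ssum t n + _ - ssum t n) with (ssum (fun i => t (n+i)%nat) m) by ring.
  eapply Rle_trans. apply ssum_abs_le with (b := fun i => C * th ^ (n + i)). intros; apply Hb.
  rewrite ssum_scal. unfold Rdiv; rewrite Rmult_assoc. apply Rmult_le_compat_l; auto. apply ssum_geom_le; auto. Qed.

Lemma G1 th C t : 0 < th < 1 -> 0 <= C -> (forall j, Rabs (t j) <= C * th ^ j) ->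
  exists l, Un_cv (ssum t) l.
Proof. intros Ht HC Hb. destruct (R_complete (ssum t)) as [l Hl]; [|eauto].
  intros eps He. destruct (pow_small th Ht (eps * (1 - th) / (C + 1))) as [N HN].
  apply Rdiv_lt_0_compat; [apply Rmult_lt_0_compat|]; lra.
  exists N. intros n m Hn Hm.
  assert (forall a b, (N <= a)%nat -> (a <= b)%nat -> Rabs (ssum t b - ssum t a) < eps).
  { intros a b Ha Hab. replace b with (a + (b - a))%nat by lia.
    eapply Rle_lt_trans; [apply (tail_bound th C t); auto|].
    assert (th ^ a <= th ^ N) by (apply pow_le_mono; [lra|lia]).
    assert (HN2 : th ^ N * (C + 1) < eps * (1 - th)).
    { apply (Rmult_lt_reg_r (/ (C+1))). apply Rinv_0_lt_compat; lra.
      rewrite Rmult_assoc, Rinv_r, Rmult_1_r by lra. exact HN. }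
    pose proof (pow_le th a ltac:(lra)). pose proof (pow_le th N ltac:(lra)).
    assert (C * th ^ a < eps * (1 - th)) by nra.
    apply (Rmult_lt_reg_r (1 - th)); [lra|]. unfold Rdiv. rewrite Rmult_assoc, Rinv_l, Rmult_1_r by lra. exact H2. }
  unfold Rdist. destruct (le_lt_dec n m). rewrite Rabs_minus_sym; auto.
  apply H; lia. Qed.

Lemma lim_abs_le u a J B : Un_cv u a -> (forall n, (J <= n)%nat -> Rabs (u n) <= B) -> Rabs a <= B.
Proof. intros Hu Hb. apply Rnot_lt_le; intros Hlt.
  destruct (Hu (Rabs a - B)) as [N HN]; [lra|].
  specialize (HN (max N J) ltac:(lia)). specialize (Hb (max N J) ltac:(lia)).
  unfold Rdist in HN. pose proof (Rabs_triang_inv a (u (max N J))).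
  rewrite Rabs_minus_sym in HN. lra. Qed.

Lemma G2 th C t t' J eta l l' : 0 < th < 1 -> 0 <= C ->
  (forall j, Rabs (t j) <= C * th ^ j) -> (forall j, Rabs (t' j) <= C * th ^ j) ->
  (forall j, (j < J)%nat -> Rabs (t j - t' j) <= eta) ->
  Un_cv (ssum t) l -> Un_cv (ssum t') l' ->
  Rabs (l - l') <= INR J * eta + 2 * C * th ^ J / (1 - th).
Proof. intros Ht HC Hb Hb' He Hl Hl'.
  apply lim_abs_le with (u := fun n => ssum t n - ssum t' n) (J := J). apply CV_minus; auto.
  intros n Hn. rewrite <- ssum_minus. replace n with (J + (n - J))%nat by lia.
  rewrite ssum_split. eapply Rle_trans; [apply Rabs_triang|]. apply Rplus_le_compat.
  - rewrite <- ssum_const. apply ssum_abs_le; auto.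
  - eapply Rle_trans. apply ssum_abs_le with (b := fun i => 2 * C * th ^ (J + i)).
    intros j _. unfold Rminus. eapply Rle_trans; [apply Rabs_triang|]. rewrite Rabs_Ropp.
    specialize (Hb (J+j)%nat); specialize (Hb' (J+j)%nat); lra.
    rewrite ssum_scal. pose proof (ssum_geom_le th J (n-J) Ht) as G. unfold Rdiv in *.
    replace (2*C*th^J*/(1-th)) with (2*C*(th^J*/(1-th))) by ring. apply Rmult_le_compat_l; [lra| exact G]. Qed.

Definition sh (z : Z) (x : Seq) : Seq := fun i => x (i + z)%Z.

Lemma iter_shift j x : Nat.iter j Defs.shift x = sh (Z.of_nat j) x.
Proof. induction j; simpl. unfold sh; apply functional_extensionality; intros i; f_equal; lia.
  rewrite IHj; unfold Defs.shift, sh; apply functional_extensionality; intros i; f_equal; lia. Qed.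

Lemma birk_ssum f n x : birk f n x = ssum (fun j => f (sh (Z.of_nat j) x)) n.
Proof. induction n; simpl; auto. rewrite IHn, iter_shift; auto. Qed.

Lemma shift_inv_sh n x : shift_inv_n n x = sh (- Z.of_nat n) x.
Proof. unfold shift_inv_n, sh; apply functional_extensionality; intros; f_equal; lia. Qed.

Lemma birk_inv_gen f y : forall j n, (j <= n)%nat ->
  birk f j (shift_inv_n n y) = ssum (fun m => f (sh (- Z.of_nat (S m)) y)) n
                               - ssum (fun m => f (sh (- Z.of_nat (S m)) y)) (n - j).
Proof. induction j; intros n Hn.
  - change (birk f 0 (shift_inv_n n y)) with 0. rewrite Nat.sub_0_r; ring.
  - change (birk f (S j) (shift_inv_n n y)) with (birk f j (shift_inv_n n y) + f (Nat.iter j Defs.shift (shift_inv_n n y))).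
    rewrite IHj by lia. rewrite iter_shift, shift_inv_sh.
    replace (n - j)%nat with (S (n - S j)) by lia.
    change (ssum ?t (S ?m)) with (ssum t m + t m). cbv beta.
    replace (sh (Z.of_nat j) (sh (- Z.of_nat n) y)) with (sh (- Z.of_nat (S (n - S j))) y).
    ring. unfold sh; apply functional_extensionality; intros; f_equal; lia. Qed.

Lemma birk_inv f n y : birk f n (shift_inv_n n y) = ssum (fun m => f (sh (- Z.of_nat (S m)) y)) n.
Proof. rewrite birk_inv_gen by lia. rewrite Nat.sub_diag. change (ssum ?t 0) with 0. ring. Qed.

Definition seqS f x y := fun n => birk f n x - birk f n y.
Definition seqU f x y := fun n => birk f n (shift_inv_n n y) - birk f n (shift_inv_n n x).
Definition tS f x y := fun j => f (sh (Z.of_nat j) x) - f (sh (Z.of_nat j) y).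
Definition tU f x y := fun m => f (sh (- Z.of_nat (S m)) y) - f (sh (- Z.of_nat (S m)) x).

Lemma seqS_eq f x y : seqS f x y = ssum (tS f x y).
Proof. apply functional_extensionality; intros n; unfold seqS, tS. rewrite ssum_minus, !birk_ssum; auto. Qed.
Lemma seqU_eq f x y : seqU f x y = ssum (tU f x y).
Proof. apply functional_extensionality; intros n; unfold seqU, tU. rewrite ssum_minus, !birk_inv; auto. Qed.

Lemma agree_sh x x' L z : agree x x' L -> agree (sh z x) (sh z x') (L - Z.to_nat (Z.abs z)).
Proof. unfold agree, sh; intros H i Hi; apply H; lia. Qed.

Lemma half_sh_S (x y : Seq) (W j : nat) : (forall i, (Z.of_nat W <= i)%Z -> y i = x i) ->
  agree (sh (Z.of_nat j) x) (sh (Z.of_nat j) y) (j - W).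
Proof. unfold agree, sh; intros H i Hi; symmetry; apply H; lia. Qed.

Lemma half_sh_U (x y : Seq) (W j : nat) : (forall i, (i <= - Z.of_nat W)%Z -> y i = x i) ->
  agree (sh (- Z.of_nat (S j)) x) (sh (- Z.of_nat (S j)) y) (j - W).
Proof. unfold agree, sh; intros H i Hi; symmetry; apply H; lia. Qed.

Lemma inSFT_sh k A x z : inSFT k A x -> inSFT k A (sh z x).
Proof. unfold inSFT, sh; intros H i. replace (i + 1 + z)%Z with ((i + z) + 1)%Z by lia. apply H. Qed.

Lemma pow_sub_le th j W : 0 < th < 1 -> th ^ (j - W) <= / th ^ W * th ^ j.
Proof. intros Ht. assert (0 < th ^ W) by (apply pow_lt; lra).
  apply Rmult_le_reg_l with (th ^ W); auto. rewrite <- Rmult_assoc, Rinv_r, Rmult_1_l by lra.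
  destruct (le_lt_dec W j).
  - rewrite <- pow_add. replace (W + (j - W))%nat with j by lia; lra.
  - replace (j - W)%nat with 0%nat by lia. rewrite Rmult_1_r. apply pow_le_mono; lra || lia. Qed.

Lemma HE_gen th C0 W t : 0 < th < 1 -> 0 <= C0 -> (forall j, Rabs (t j) <= C0 * th ^ (j - W)) ->
  exists l, Un_cv (ssum t) l.
Proof. intros Ht HC Hb. apply (G1 th (C0 * / th ^ W)); auto.
  apply Rmult_le_pos; auto. left; apply Rinv_0_lt_compat, pow_lt; lra.
  intros j. eapply Rle_trans; [apply Hb|]. rewrite Rmult_assoc. apply Rmult_le_compat_l; auto.
  apply pow_sub_le; auto. Qed.

Lemma small_mult th a e : 0 < th < 1 -> 0 <= a -> 0 < e -> exists n, a * th ^ n <= e.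
Proof. intros Ht Ha He. destruct (pow_small th Ht (e / (a + 1))) as [n Hn].
  apply Rdiv_lt_0_compat; lra. exists n. pose proof (pow_le th n ltac:(lra)).
  assert (th ^ n * (a + 1) <= e).
  { apply Rmult_le_reg_r with (/ (a+1)). apply Rinv_0_lt_compat; lra.
    rewrite Rmult_assoc, Rinv_r, Rmult_1_r by lra. left; exact Hn. }
  nra. Qed.

Lemma HC_gen th C0 W e : 0 < th < 1 -> 0 <= C0 -> 0 < e -> exists L, forall t t' l l',
  (forall j, Rabs (t j) <= C0 * th ^ (j - W)) -> (forall j, Rabs (t' j) <= C0 * th ^ (j - W)) ->
  (forall j, Rabs (t j - t' j) <= 2 * C0 * th ^ (L - S j)) ->
  Un_cv (ssum t) l -> Un_cv (ssum t') l' -> Rabs (l - l') <= e.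
Proof. intros Ht HC He. set (C := C0 * / th ^ W).
  assert (HC' : 0 <= C). { apply Rmult_le_pos; auto. left; apply Rinv_0_lt_compat, pow_lt; lra. }
  destruct (small_mult th (2 * C / (1 - th)) (e/2) Ht) as [J HJ].
  { apply Rmult_le_pos; [lra|]. left; apply Rinv_0_lt_compat; lra. } lra.
  destruct (small_mult th (INR J * (2 * C0)) (e/2) Ht) as [L' HL'].
  { apply Rmult_le_pos; [apply pos_INR|lra]. } lra.
  exists (J + L')%nat. intros t t' l l' Hb Hb' Hd Hl Hl'.
  assert (Hb2 : forall j, Rabs (t j) <= C * th ^ j).
  { intros j. eapply Rle_trans; [apply Hb|]. unfold C; rewrite Rmult_assoc. apply Rmult_le_compat_l; auto. apply pow_sub_le; auto. }
  assert (Hb2' : forall j, Rabs (t' j) <= C * th ^ j).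
  { intros j. eapply Rle_trans; [apply Hb'|]. unfold C; rewrite Rmult_assoc. apply Rmult_le_compat_l; auto. apply pow_sub_le; auto. }
  eapply Rle_trans. apply (G2 th C t t' J (2 * C0 * th ^ L')); auto.
  intros j Hj. eapply Rle_trans; [apply Hd|]. apply Rmult_le_compat_l; [lra|]. apply pow_le_mono; lra || lia.
  replace (2 * C * th ^ J / (1 - th)) with (2 * C / (1 - th) * th ^ J) by (field; lra).
  replace (INR J * (2 * C0 * th ^ L')) with (INR J * (2 * C0) * th ^ L') by ring. lra. Qed.

Definition LIP k A th f C0 := 0 <= C0 /\ forall x y, inSFT k A x -> inSFT k A y -> Rabs (f x - f y) <= C0 * dtheta th x y.

Lemma LIP_of k A th f : 0 <= th -> lipschitz_theta k A th f -> exists C0, LIP k A th f C0.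
Proof. intros Ht [C HC]. exists (Rabs C). split. apply Rabs_pos.
  intros x y Hx Hy. eapply Rle_trans; [apply HC; auto|]. apply Rmult_le_compat_r.
  apply dtheta_nonneg; auto. apply RRle_abs. Qed.

Lemma fbound k A th f C0 x y w : 0 < th < 1 -> LIP k A th f C0 -> inSFT k A x -> inSFT k A y -> agree x y w ->
  Rabs (f x - f y) <= C0 * th ^ w.
Proof. intros Ht [HC H] Hx Hy Ha. eapply Rle_trans; [apply H; auto|]. apply Rmult_le_compat_l; auto.
  apply dtheta_agree; auto; lra. Qed.

Definition halfS (W : nat) (x y : Seq) := forall i, (Z.of_nat W <= i)%Z -> y i = x i.
Definition halfU (W : nat) (x y : Seq) := forall i, (i <= - Z.of_nat W)%Z -> y i = x i.

Lemma tS_bound k A th f C0 W x y : 0 < th < 1 -> LIP k A th f C0 -> inSFT k A x -> inSFT k A y -> halfS W x y ->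
  forall j, Rabs (tS f x y j) <= C0 * th ^ (j - W).
Proof. intros Ht HL Hx Hy Hh j. unfold tS. apply (fbound k A); auto using inSFT_sh. apply half_sh_S; auto. Qed.

Lemma tU_bound k A th f C0 W x y : 0 < th < 1 -> LIP k A th f C0 -> inSFT k A x -> inSFT k A y -> halfU W x y ->
  forall j, Rabs (tU f x y j) <= C0 * th ^ (j - W).
Proof. intros Ht HL Hx Hy Hh j. unfold tU. rewrite Rabs_minus_sym. apply (fbound k A); auto using inSFT_sh. apply half_sh_U; auto. Qed.

Lemma HE_S k A th f C0 W x y : 0 < th < 1 -> LIP k A th f C0 -> inSFT k A x -> inSFT k A y -> halfS W x y ->
  exists l, Un_cv (seqS f x y) l.
Proof. intros. rewrite seqS_eq. apply (HE_gen th C0 W); auto. destruct H0; auto. eapply tS_bound; eauto. Qed.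

Lemma HE_U k A th f C0 W x y : 0 < th < 1 -> LIP k A th f C0 -> inSFT k A x -> inSFT k A y -> halfU W x y ->
  exists l, Un_cv (seqU f x y) l.
Proof. intros. rewrite seqU_eq. apply (HE_gen th C0 W); auto. destruct H0; auto. eapply tU_bound; eauto. Qed.

Lemma diff2 a b c d e1 e2 : Rabs (a - c) <= e1 -> Rabs (b - d) <= e2 -> Rabs ((a - b) - (c - d)) <= e1 + e2.
Proof. intros H1 H2. replace ((a - b) - (c - d)) with ((a - c) + - (b - d)) by ring.
  eapply Rle_trans; [apply Rabs_triang|]. rewrite Rabs_Ropp; lra. Qed.

Lemma HC_S k A th f C0 W e : 0 < th < 1 -> LIP k A th f C0 -> 0 < e -> exists L,
  forall x y x' y' l l', inSFT k A x -> inSFT k A y -> inSFT k A x' -> inSFT k A y' ->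
  halfS W x y -> halfS W x' y' -> agree x x' L -> agree y y' L ->
  Un_cv (seqS f x y) l -> Un_cv (seqS f x' y') l' -> Rabs (l - l') <= e.
Proof. intros Ht HL He. destruct (HC_gen th C0 W e Ht (proj1 HL) He) as [L HLe].
  exists L. intros x y x' y' l l' Hx Hy Hx' Hy' Hh Hh' Ha Hb Hl Hl'. rewrite seqS_eq in *.
  apply (HLe (tS f x y) (tS f x' y')); auto; try (eapply tS_bound; eauto).
  intros j. unfold tS. replace (2 * C0 * th ^ (L - S j)) with (C0 * th ^ (L - S j) + C0 * th ^ (L - S j)) by ring.
  pose proof (proj1 HL) as HC0.
  assert (th ^ (L - j) <= th ^ (L - S j)) by (apply pow_le_mono; lra || lia).
  apply diff2; (eapply Rle_trans; [eapply (fbound k A); eauto using inSFT_sh; apply agree_sh; eauto|]);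
  replace (Z.to_nat (Z.abs (Z.of_nat j))) with j by lia; apply Rmult_le_compat_l; auto. Qed.

Lemma HC_U k A th f C0 W e : 0 < th < 1 -> LIP k A th f C0 -> 0 < e -> exists L,
  forall x y x' y' l l', inSFT k A x -> inSFT k A y -> inSFT k A x' -> inSFT k A y' ->
  halfU W x y -> halfU W x' y' -> agree x x' L -> agree y y' L ->
  Un_cv (seqU f x y) l -> Un_cv (seqU f x' y') l' -> Rabs (l - l') <= e.
Proof. intros Ht HL He. destruct (HC_gen th C0 W e Ht (proj1 HL) He) as [L HLe].
  exists L. intros x y x' y' l l' Hx Hy Hx' Hy' Hh Hh' Ha Hb Hl Hl'. rewrite seqU_eq in *.
  apply (HLe (tU f x y) (tU f x' y')); auto; try (eapply tU_bound; eauto).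
  intros j. unfold tU. replace (2 * C0 * th ^ (L - S j)) with (C0 * th ^ (L - S j) + C0 * th ^ (L - S j)) by ring.
  pose proof (proj1 HL) as HC0.
  apply diff2; (eapply Rle_trans; [eapply (fbound k A); eauto using inSFT_sh; apply agree_sh; eauto|]);
  replace (Z.to_nat (Z.abs (- Z.of_nat (S j)))) with (S j) by lia; lra. Qed.

Lemma Un_cv_ext u v l : (forall n, u n = v n) -> Un_cv u l -> Un_cv v l.
Proof. intros H Hu e He. destruct (Hu e He) as [N HN]. exists N; intros n Hn; rewrite <- H; auto. Qed.

Lemma Un_cv_const c : Un_cv (fun _ => c) c.
Proof. intros e He; exists 0%nat; intros; unfold Rdist; rewrite Rminus_diag, Rabs_R0; auto. Qed.

Lemma Ws_n_iff k A f W x r y s : Ws_n k A f (Z.of_nat W) (x, r) (y, s) <->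
  inSFT k A y /\ halfS W x y /\ Un_cv (seqS f x y) (s - r).
Proof. unfold Ws_n, Ws, halfS, seqS; simpl. split.
  - intros [[H1 [_ H3]] H4]; auto.
  - intros [H1 [H2 H3]]; split; [split; [auto|split; [exists (Z.of_nat W)|]]|]; auto. Qed.

Lemma Wu_n_iff k A f W x r y s : Wu_n k A f (Z.of_nat W) (x, r) (y, s) <->
  inSFT k A y /\ halfU W x y /\ Un_cv (seqU f x y) (s - r).
Proof. unfold Wu_n, Wu, halfU, seqU; simpl. split.
  - intros [[H1 [_ H3]] H4]; auto.
  - intros [H1 [H2 H3]]; split; [split; [auto|split; [exists (- Z.of_nat W)%Z|]]|]; auto. Qed.

Definition stepW k A f W (q r : Pt) := Ws_n k A f (Z.of_nat W) q r \/ Wu_n k A f (Z.of_nat W) q r.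

Lemma stepW_SFT k A f W q r : stepW k A f W q r -> inSFTR k A r.
Proof. destruct q as [x a], r as [y b]; unfold inSFTR; simpl.
  intros [H|H]; [apply Ws_n_iff in H|apply Wu_n_iff in H]; tauto. Qed.

Lemma stepW_mono k A f W W' q r : (W <= W')%nat -> stepW k A f W q r -> stepW k A f W' q r.
Proof. destruct q as [x a], r as [y b]; intros Hle [H|H]; [left|right].
  - apply Ws_n_iff in H; apply Ws_n_iff; destruct H as [H1 [H2 H3]]; refine (conj _ (conj _ _)); auto.
    intros i Hi; apply H2; lia.
  - apply Wu_n_iff in H; apply Wu_n_iff; destruct H as [H1 [H2 H3]]; refine (conj _ (conj _ _)); auto.
    intros i Hi; apply H2; lia. Qed.

Lemma stepW_triv k A f W q : inSFTR k A q -> stepW k A f W q q.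
Proof. destruct q as [x a]; unfold inSFTR; simpl; intros H; left; apply Ws_n_iff.
  refine (conj _ (conj _ _)); auto. intros i _; auto. unfold seqS. rewrite Rminus_diag.
  apply Un_cv_ext with (fun _ => 0). intros; ring. apply Un_cv_const. Qed.

Lemma stepW_rev k A f W q r : inSFTR k A q -> stepW k A f W q r -> stepW k A f W r q.
Proof. destruct q as [x a], r as [y b]; unfold inSFTR; simpl; intros Hx [H|H]; [left|right].
  - apply Ws_n_iff in H; apply Ws_n_iff; destruct H as [H1 [H2 H3]]; refine (conj _ (conj _ _)); auto.
    intros i Hi; symmetry; apply H2; lia.
    replace (a - b) with (- (b - a)) by ring. apply CV_opp in H3.
    apply Un_cv_ext with (opp_seq (seqS f x y)); auto. intros; unfold opp_seq, seqS; ring.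
  - apply Wu_n_iff in H; apply Wu_n_iff; destruct H as [H1 [H2 H3]]; refine (conj _ (conj _ _)); auto.
    intros i Hi; symmetry; apply H2; lia.
    replace (a - b) with (- (b - a)) by ring. apply CV_opp in H3.
    apply Un_cv_ext with (opp_seq (seqU f x y)); auto. intros; unfold opp_seq, seqU; ring. Qed.

Lemma chain_step k A f W p m q r : chainN k A f W p m q -> stepW k A f W q r -> chainN k A f W p (S m) r.
Proof. intros; econstructor; eauto. Qed.

Lemma chain_SFT k A f W p m q : inSFTR k A p -> chainN k A f W p m q -> inSFTR k A q.
Proof. intros Hp H; induction H; auto. eapply stepW_SFT; eauto. Qed.

Lemma chain_mono k A f W W' p m q : (W <= W')%nat -> chainN k A f W p m q -> chainN k A f W' p m q.
Proof. intros Hle H; induction H; [constructor|]. eapply chain_step; eauto. eapply stepW_mono; eauto. Qed.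

Lemma chain_app k A f W p m q m' r : chainN k A f W p m q -> chainN k A f W q m' r -> chainN k A f W p (m + m') r.
Proof. intros H1 H2; induction H2. rewrite Nat.add_0_r; auto. rewrite Nat.add_succ_r. eapply chain_step; eauto. Qed.

Lemma chain_one k A f W p q : stepW k A f W p q -> chainN k A f W p 1 q.
Proof. intros; eapply chain_step; [constructor|auto]. Qed.

Lemma chain_rev k A f W p m q : inSFTR k A p -> chainN k A f W p m q -> chainN k A f W q m p.
Proof. intros Hp H; induction H. constructor.
  replace (S m) with (1 + m)%nat by lia. eapply chain_app; [|apply IHchainN; auto].
  apply chain_one, stepW_rev; auto. eapply chain_SFT; eauto. Qed.

Lemma chain_pad k A f W p m q : inSFTR k A p -> chainN k A f W p m q -> forall N, (m <= N)%nat -> chainN k A f W p N q.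
Proof. intros Hp H N HN. replace N with (m + (N - m))%nat by lia. eapply chain_app; eauto.
  assert (Hq : inSFTR k A q) by (eapply chain_SFT; eauto).
  induction (N - m)%nat. constructor. eapply chain_step; eauto. apply stepW_triv; auto. Qed.

Lemma AC_N_mono k A f N N' p q : (N <= N')%nat -> AC_N k A f N p q -> AC_N k A f N' p q.
Proof. intros Hle [m [Hm Hc]]. exists m; split; [lia|]. eapply chain_mono; eauto. Qed.

Lemma AC_to_N k A f p q : AC k A f p q -> exists M, AC_N k A f M p q.
Proof. intros H; induction H. exists 0%nat, 0%nat; split; [lia|constructor].
  destruct IHAC as [M [m [Hm Hc]]]. destruct q as [x a], r as [y b].
  assert (exists W, stepW k A f W (x, a) (y, b)) as [W HW].
  { destruct H0 as [H0|H0].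
    - destruct H0 as [H1 [[M0 H2] H3]]. exists (Z.to_nat (Z.abs M0)). left; apply Ws_n_iff; refine (conj _ (conj _ _)); auto.
      intros i Hi; apply H2; lia.
    - destruct H0 as [H1 [[M0 H2] H3]]. exists (Z.to_nat (Z.abs M0)). right; apply Wu_n_iff; refine (conj _ (conj _ _)); auto.
      intros i Hi; apply H2; lia. }
  exists (Nat.max (S M) W), (S m); split; [lia|]. eapply chain_step.
  eapply chain_mono; [|exact Hc]; lia. eapply stepW_mono; [|exact HW]; lia. Qed.

Lemma chain_fun k A f W p m q : chainN k A f W p m q ->
  exists ps : nat -> Pt, ps 0%nat = p /\ ps m = q /\ forall c, (c < m)%nat -> stepW k A f W (ps c) (ps (S c)).
Proof. intros H; induction H. exists (fun _ => p); repeat split; auto; intros; lia.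
  destruct IHchainN as [ps [H1 [H2 H3]]].
  exists (fun c => if Nat.eqb c (S m) then r else ps c). simpl. rewrite Nat.eqb_refl.
  refine (conj _ (conj _ _)); auto. intros c Hc. destruct (Nat.eqb c (S m)) eqn:E1; [apply Nat.eqb_eq in E1; lia|].
  change (stepW k A f W (ps c) (if Nat.eqb c m then r else ps (S c))).
  destruct (Nat.eqb c m) eqn:E2.
  - apply Nat.eqb_eq in E2. subst c. rewrite H2; exact H0.
  - apply H3. apply Nat.eqb_neq in E2; lia. Qed.

Lemma fun_chain k A f W (ps : nat -> Pt) m : (forall c, (c < m)%nat -> stepW k A f W (ps c) (ps (S c))) ->
  chainN k A f W (ps 0%nat) m (ps m).
Proof. induction m; intros H. constructor. eapply chain_step; [apply IHm; intros; apply H; lia| apply H; lia]. Qed.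

Definition splice (B : Z) (u v : Seq) : Seq := fun i => if Z.ltb i B then u i else v i.

Lemma splice_SFT k A B u v : inSFT k A u -> inSFT k A v -> u B = v B -> inSFT k A (splice B u v).
Proof. unfold inSFT, splice; intros Hu Hv Hb i.
  destruct (Z.ltb_spec i B); destruct (Z.ltb_spec (i + 1) B).
  - apply Hu.
  - assert (i + 1 = B)%Z by lia. subst B. rewrite <- Hb. apply Hu.
  - lia.
  - apply Hv. Qed.

Lemma shadow_step k A th f C0 W x r x1 r1 : 0 < th < 1 -> LIP k A th f C0 -> inSFT k A x ->
  stepW k A f W (x, r) (x1, r1) -> forall L0 e, 0 < e -> exists L1, (L0 <= L1)%nat /\
  forall x' r', inSFT k A x' -> agree x x' L1 -> exists x1' r1', agree x1 x1' L1 /\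
    stepW k A f W (x', r') (x1', r1') /\ Rabs ((r1' - r') - (r1 - r)) <= e.
Proof. intros Ht HL Hx Hst L0 e He. destruct Hst as [Hs|Hs].
  - apply Ws_n_iff in Hs as [Hx1 [Hh Hl]].
    destruct (HC_S k A th f C0 W e Ht HL He) as [L HLc].
    exists (Nat.max L (Nat.max L0 (S W))). split; [lia|]. intros x' r' Hx' Ha.
    set (w := splice (Z.of_nat W) x1 x').
    assert (Hw : inSFT k A w). { apply splice_SFT; auto. rewrite Hh by lia. apply Ha; lia. }
    assert (Hhw : halfS W x' w). { intros i Hi; unfold w, splice. destruct (Z.ltb_spec i (Z.of_nat W)); auto; lia. }
    destruct (HE_S k A th f C0 W x' w Ht HL Hx' Hw Hhw) as [l' Hl'].
    exists w, (r' + l'). split; [|split].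
    + intros i Hi. unfold w, splice. destruct (Z.ltb_spec i (Z.of_nat W)); auto.
      rewrite Hh by lia. apply Ha; lia.
    + left. apply Ws_n_iff. split; [auto|split; auto]. replace (r' + l' - r') with l' by ring; auto.
    + replace (r' + l' - r') with l' by ring. rewrite Rabs_minus_sym.
      apply (HLc x x1 x' w); auto. eapply agree_mono; [|exact Ha]; lia.
      intros i Hi. unfold w, splice. destruct (Z.ltb_spec i (Z.of_nat W)); auto.
      rewrite Hh by lia. apply Ha; lia.
  - apply Wu_n_iff in Hs as [Hx1 [Hh Hl]].
    destruct (HC_U k A th f C0 W e Ht HL He) as [L HLc].
    exists (Nat.max L (Nat.max L0 (S W))). split; [lia|]. intros x' r' Hx' Ha.
    set (w := splice (- Z.of_nat W) x' x1).
    assert (Hw : inSFT k A w). { apply splice_SFT; auto. rewrite Hh by lia. symmetry; apply Ha; lia. }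
    assert (Hhw : halfU W x' w). { intros i Hi; unfold w, splice. destruct (Z.ltb_spec i (- Z.of_nat W)); auto.
      assert (i = - Z.of_nat W)%Z by lia. subst i. rewrite Hh by lia; first [apply Ha; lia | symmetry; apply Ha; lia]. }
    destruct (HE_U k A th f C0 W x' w Ht HL Hx' Hw Hhw) as [l' Hl'].
    assert (Hag : agree x1 w (Nat.max L (Nat.max L0 (S W)))).
    { intros i Hi. unfold w, splice. destruct (Z.ltb_spec i (- Z.of_nat W)); auto.
      rewrite Hh by lia. apply Ha; lia. }
    exists w, (r' + l'). split; [auto|split].
    + right. apply Wu_n_iff. split; [auto|split; auto]. replace (r' + l' - r') with l' by ring; auto.
    + replace (r' + l' - r') with l' by ring. rewrite Rabs_minus_sym.
      apply (HLc x x1 x' w); auto. eapply agree_mono; [|exact Ha]; lia. eapply agree_mono; [|exact Hag]; lia. Qed.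

Lemma shadow k A th f C0 W q0 m q : 0 < th < 1 -> LIP k A th f C0 -> inSFTR k A q0 ->
  chainN k A f W q0 m q -> forall L0 e, 0 < e -> exists L d, 0 < d /\
  forall q0', inSFTR k A q0' -> agree (fst q0) (fst q0') L -> Rabs (snd q0' - snd q0) < d ->
  exists q', chainN k A f W q0' m q' /\ agree (fst q) (fst q') L0 /\ Rabs (snd q' - snd q) < e.
Proof. intros Ht HL Hq0 H. induction H; intros L0 e He.
  - exists L0, e; split; auto. intros q0' _ Ha Hr. exists q0'; split; [constructor|auto].
  - assert (Hq : inSFTR k A q) by (eapply chain_SFT; eauto).
    destruct q as [x a], r as [y b].
    destruct (shadow_step k A th f C0 W x a y b Ht HL Hq H0 L0 (e/2)) as [L1 [HL1 Hst]]; [lra|].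
    destruct (IHchainN L1 (e/2)) as [L [d [Hd HLd]]]; [lra|].
    exists L, d; split; auto. intros q0' Hq0' Ha Hr.
    destruct (HLd q0' Hq0' Ha Hr) as [[x' a'] [Hc [Ha' Hr']]]. simpl in *.
    assert (Hx' : inSFT k A x') by (apply (chain_SFT k A f W q0' m (x', a')); auto).
    destruct (Hst x' a' Hx' Ha') as [y' [b' [Hy [Hs Hb]]]].
    exists (y', b'). split; [eapply chain_step; eauto|]. simpl. split.
    eapply agree_mono; [|exact Hy]; lia.
    replace (b' - b) with ((b' - a' - (b - a)) + (a' - a)) by ring.
    eapply Rle_lt_trans; [apply Rabs_triang|]. lra. Qed.

Definition infinite (P : nat -> Prop) := forall M, exists n, (M <= n)%nat /\ P n.

Lemma pigeon B : forall (P : nat -> Prop) (g : nat -> nat), infinite P -> (forall n, P n -> (g n < B)%nat) ->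
  exists v, (v < B)%nat /\ infinite (fun n => P n /\ g n = v).
Proof. induction B; intros P g HP Hg.
  - destruct (HP 0%nat) as [n [_ Hn]]. specialize (Hg n Hn); lia.
  - destruct (classic (infinite (fun n => P n /\ g n = B))) as [Hi|Hi].
    + exists B; split; auto.
    + unfold infinite in Hi. apply not_all_ex_not in Hi as [M0 HM0].
      destruct (IHB (fun n => P n /\ (M0 <= n)%nat) g) as [v [Hv Hinf]].
      * intros M. destruct (HP (Nat.max M M0)) as [n [Hn Pn]]. exists n; split; [lia|split; auto; lia].
      * intros n [Pn Hn]. specialize (Hg n Pn). destruct (Nat.eq_dec (g n) B).
        exfalso; apply HM0; exists n; auto. lia.
      * exists v; split; [lia|]. intros M. destruct (Hinf M) as [n [Hn [[Pn _] Hg']]]. exists n; auto. Qed.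



Definition chooseV (B : nat) (P : nat -> Prop) (g : nat -> nat) : nat :=
  epsilon (inhabits 0%nat) (fun v => (v < B)%nat /\ infinite (fun n => P n /\ g n = v)).

Fixpoint Pst (X : nat -> Seq) (B : nat) (s : nat) : nat -> Prop :=
  match s with
  | O => fun _ => True
  | S s' =>
    let P := Pst X B s' in
    let v := chooseV B P (fun n => X n (Z.of_nat s')) in
    let P1 := fun n => P n /\ X n (Z.of_nat s') = v in
    let w := chooseV B P1 (fun n => X n (- Z.of_nat s')%Z) in
    fun n => P1 n /\ X n (- Z.of_nat s')%Z = w
  end.

Definition vs X B s := chooseV B (Pst X B s) (fun n => X n (Z.of_nat s)).
Definition ws X B s := chooseV B (fun n => Pst X B s n /\ X n (Z.of_nat s) = vs X B s) (fun n => X n (- Z.of_nat s)%Z).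

Lemma Pst_S X B s n : Pst X B (S s) n <-> Pst X B s n /\ X n (Z.of_nat s) = vs X B s /\ X n (- Z.of_nat s)%Z = ws X B s.
Proof. simpl; unfold ws, vs; tauto. Qed.

Lemma Pst_inf X B : (forall n i, (X n i < B)%nat) -> forall s, infinite (Pst X B s).
Proof. intros HB s; induction s.
  - intros M; exists M; split; simpl; auto.
  - assert (H1 : infinite (fun n => Pst X B s n /\ X n (Z.of_nat s) = vs X B s)).
    { unfold vs, chooseV. apply (epsilon_spec (inhabits 0%nat) (fun v => (v < B)%nat /\ infinite (fun n => Pst X B s n /\ X n (Z.of_nat s) = v))).
      apply pigeon; auto. }
    assert (H2 : infinite (fun n => (Pst X B s n /\ X n (Z.of_nat s) = vs X B s) /\ X n (- Z.of_nat s)%Z = ws X B s)).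
    { unfold ws, chooseV. apply (epsilon_spec (inhabits 0%nat) (fun v => (v < B)%nat /\ infinite (fun n => (Pst X B s n /\ X n (Z.of_nat s) = vs X B s) /\ X n (- Z.of_nat s)%Z = v))).
      apply pigeon; auto. }
    intros M; destruct (H2 M) as [n [Hn Pn]]; exists n; split; auto. Qed.

Lemma Pst_mono X B s s' n : (s <= s')%nat -> Pst X B s' n -> Pst X B s n.
Proof. intros H; induction H; auto. intros Hp; apply IHle. apply Pst_S in Hp; tauto. Qed.

Definition Ylim X B : Seq := fun i => if Z.leb 0 i then vs X B (Z.to_nat i) else ws X B (Z.to_nat (- i)).

Lemma konig X B : (forall n i, (X n i < B)%nat) -> forall L M, exists n, (M <= n)%nat /\ agree (X n) (Ylim X B) L.
Proof. intros HB L M. destruct (Pst_inf X B HB L M) as [n [Hn Pn]]. exists n; split; auto.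
  intros i Hi. unfold Ylim. destruct (Z.leb_spec 0 i).
  - assert (Hs : Pst X B (S (Z.to_nat i)) n) by (apply Pst_mono with L; auto; lia).
    apply Pst_S in Hs. destruct Hs as [_ [Hs _]]. rewrite Z2Nat.id in Hs by lia. auto.
  - assert (Hs : Pst X B (S (Z.to_nat (- i))) n) by (apply Pst_mono with L; auto; lia).
    apply Pst_S in Hs. destruct Hs as [_ [_ Hs]]. rewrite Z2Nat.id in Hs by lia.
    replace (- - i)%Z with i in Hs by lia. auto. Qed.

Fixpoint encF (b D : nat) (g : nat -> nat) : nat :=
  match D with O => O | S D' => (g O + b * encF b D' (fun c => g (S c)))%nat end.
Fixpoint decF (b c v : nat) : nat :=
  match c with O => Nat.modulo v b | S c' => decF b c' (Nat.div v b) end.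

Lemma dec_enc b D : (0 < b)%nat -> forall g c, (c < D)%nat -> (forall c', (c' < D)%nat -> (g c' < b)%nat) ->
  decF b c (encF b D g) = g c.
Proof. intros Hb. induction D; intros g c Hc Hg; [lia|]. simpl. destruct c.
  - simpl. rewrite Nat.mul_comm, Nat.Div0.mod_add. apply Nat.mod_small, Hg; lia.
  - simpl. rewrite Nat.mul_comm, Nat.div_add by lia. rewrite Nat.div_small by (apply Hg; lia). simpl.
    apply (IHD (fun c => g (S c))); [lia|]. intros; apply Hg; lia. Qed.

Lemma enc_bound b D : forall g, (forall c', (c' < D)%nat -> (g c' < b)%nat) -> (encF b D g < b ^ D)%nat.
Proof. induction D; intros g Hg; simpl. lia.
  assert (encF b D (fun c => g (S c)) < b ^ D)%nat by (apply IHD; intros; apply Hg; lia).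
  assert (g 0 < b)%nat by (apply Hg; lia). nia. Qed.

Lemma Ws_n_pt k A f W q r : Ws_n k A f (Z.of_nat W) q r ->
  inSFT k A (fst r) /\ halfS W (fst q) (fst r) /\ Un_cv (seqS f (fst q) (fst r)) (snd r - snd q).
Proof. destruct q, r; simpl; apply Ws_n_iff. Qed.
Lemma Wu_n_pt k A f W q r : Wu_n k A f (Z.of_nat W) q r ->
  inSFT k A (fst r) /\ halfU W (fst q) (fst r) /\ Un_cv (seqU f (fst q) (fst r)) (snd r - snd q).
Proof. destruct q, r; simpl; apply Wu_n_iff. Qed.

Definition holS f x y := epsilon (inhabits 0) (fun l => Un_cv (seqS f x y) l).
Definition holU f x y := epsilon (inhabits 0) (fun l => Un_cv (seqU f x y) l).

Fixpoint rhoF (r0 : R) (h : nat -> R) (c : nat) : R :=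
  match c with O => r0 | S c' => rhoF r0 h c' + h c' end.

Lemma chain_fun_SFT k A f W (ps : nat -> Pt) m : inSFTR k A (ps 0%nat) ->
  (forall c, (c < m)%nat -> stepW k A f W (ps c) (ps (S c))) -> forall c, (c <= m)%nat -> inSFTR k A (ps c).
Proof. intros H0 H c; induction c; intros Hc; auto. eapply stepW_SFT; apply H; lia. Qed.

Lemma inv_lt e : 0 < e -> exists M, / (INR M + 1) < e.
Proof. intros He. destruct (archimed_cor1 e He) as [M [HM HM0]]. exists M.
  eapply Rle_lt_trans; [|exact HM]. apply Rinv_le_contravar. apply lt_0_INR; lia. lra. Qed.

Lemma closed_ACN k A th f C0 p N q : 0 < th < 1 -> LIP k A th f C0 -> inSFTR k A p -> inSFTR k A q ->
  ~ AC_N k A f N p q -> exists L d, 0 < d /\ forall q', inSFTR k A q' -> agree (fst q) (fst q') L ->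
  Rabs (snd q' - snd q) < d -> ~ AC_N k A f N p q'.
Proof. intros Ht HL Hp Hq HnAC. apply NNPP; intros Hno.
  set (Spec := fun (n : nat) (ps : nat -> Pt) => ps 0%nat = p /\ agree (fst q) (fst (ps N)) n /\
     Rabs (snd (ps N) - snd q) < / (INR n + 1) /\ (forall c, (c < N)%nat -> stepW k A f N (ps c) (ps (S c)))).
  assert (Hseq : forall n, exists ps, Spec n ps).
  { intros n. apply NNPP; intros H. apply Hno. exists n, (/ (INR n + 1)). split.
    apply Rinv_0_lt_compat; pose proof (pos_INR n); lra.
    intros q' Hq' Ha Hr [m [Hm Hc]]. apply H.
    destruct (chain_fun k A f N p N q' (chain_pad k A f N p m q' Hp Hc N Hm)) as [ps [H1 [H2 H3]]].
    exists ps. unfold Spec; rewrite H2; auto. }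
  set (PS := fun n => epsilon (inhabits (fun _ : nat => p)) (Spec n)).
  assert (HPS : forall n, Spec n (PS n)) by (intros n; apply (epsilon_spec _ (Spec n)), Hseq).
  assert (HSFT : forall n c, (c <= N)%nat -> inSFTR k A (PS n c)).
  { intros n. destruct (HPS n) as [H0 [_ [_ H3]]]. apply chain_fun_SFT with f N; auto. rewrite H0; auto. }
  set (bit := fun n c => if excluded_middle_informative (Ws_n k A f (Z.of_nat N) (PS n c) (PS n (S c))) then 1%nat else 0%nat).
  set (b := (k + 2)%nat). set (D := (S N + N)%nat).
  set (gg := fun n c i => if Nat.leb c N then fst (PS n c) i else bit n (c - S N)%nat).
  assert (Hgg : forall n c i, (gg n c i < b)%nat).
  { intros n c i. unfold gg, b. destruct (Nat.leb_spec c N).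
    - destruct (HSFT n c H i); lia.
    - unfold bit; destruct excluded_middle_informative; lia. }
  set (X := fun n i => encF b D (fun c => gg n c i)).
  assert (HB : forall n i, (X n i < b ^ D)%nat) by (intros; apply enc_bound; auto).
  set (Y := Ylim X (b ^ D)).
  set (Yc := fun c i => decF b c (Y i)).
  set (beta := fun c => decF b (S N + c) (Y 0%Z)).
  assert (Hcl : forall L M, exists n, (M <= n)%nat /\ (forall c, (c <= N)%nat -> agree (fst (PS n c)) (Yc c) L) /\
     ((0 < L)%nat -> forall c, (c < N)%nat -> bit n c = beta c)).
  { intros L M. destruct (konig X (b ^ D) HB L M) as [n [Hn Ha]]. change (agree (X n) Y L) in Ha. exists n; split; auto. split.
    - intros c Hc i Hi. unfold Yc. rewrite <- (Ha i Hi). unfold X. rewrite dec_enc; try lia.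
      unfold gg. destruct (Nat.leb_spec c N); [auto|lia]. intros; auto.
    - intros HL0 c Hc. unfold beta. rewrite <- (Ha 0%Z) by lia. unfold X. rewrite dec_enc; try lia.
      unfold gg. destruct (Nat.leb_spec (S N + c) N); [lia|]. f_equal; lia. intros; auto. }
  assert (Y1 : forall c, (c <= N)%nat -> inSFT k A (Yc c)).
  { intros c Hc i. destruct (Hcl (S (S (Z.to_nat (Z.abs i)))) 0%nat) as [n [_ [Ha _]]].
    specialize (Ha c Hc). rewrite <- (Ha i) by lia. rewrite <- (Ha (i+1)%Z) by lia. apply (HSFT n c Hc). }
  assert (Hbit1 : forall n c, bit n c = 1%nat -> Ws_n k A f (Z.of_nat N) (PS n c) (PS n (S c))).
  { intros n c; unfold bit; destruct excluded_middle_informative; auto; discriminate. }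
  assert (Hbit0 : forall n c, (c < N)%nat -> bit n c <> 1%nat -> Wu_n k A f (Z.of_nat N) (PS n c) (PS n (S c))).
  { intros n c Hc; unfold bit; destruct excluded_middle_informative; [congruence|]. intros _.
    destruct (HPS n) as [_ [_ [_ H3]]]. destruct (H3 c Hc); tauto. }
  assert (Y2 : forall c, (c < N)%nat -> (beta c = 1%nat -> halfS N (Yc c) (Yc (S c))) /\
                                       (beta c <> 1%nat -> halfU N (Yc c) (Yc (S c)))).
  { intros c Hc; split; intros Hb i Hi; destruct (Hcl (S (Z.to_nat (Z.abs i))) 0%nat) as [n [_ [Ha Hbb]]];
    rewrite <- (Ha c) by lia; rewrite <- (Ha (S c)) by lia; rewrite <- Hbb in Hb by lia.
    - apply Hbit1, Ws_n_pt in Hb. destruct Hb as [_ [Hh _]]; auto.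
    - apply Hbit0, Wu_n_pt in Hb; auto. destruct Hb as [_ [Hh _]]; auto. }
  assert (Y3 : Yc 0%nat = fst p).
  { apply agree_all_eq; intros L. destruct (Hcl L 0%nat) as [n [_ [Ha _]]].
    apply agree_sym. destruct (HPS n) as [H0 _]. rewrite <- H0. apply Ha; lia. }
  assert (Y4 : Yc N = fst q).
  { apply agree_all_eq; intros L. destruct (Hcl L L) as [n [Hn [Ha _]]].
    apply agree_sym. destruct (HPS n) as [_ [H1 _]]. eapply agree_trans; [|apply Ha; lia].
    eapply agree_mono; [|exact H1]; lia. }
  set (h := fun c => if Nat.eqb (beta c) 1 then holS f (Yc c) (Yc (S c)) else holU f (Yc c) (Yc (S c))).
  set (rho := rhoF (snd p) h).
  assert (Hh : forall c, (c < N)%nat -> (beta c = 1%nat -> Un_cv (seqS f (Yc c) (Yc (S c))) (h c)) /\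
                                       (beta c <> 1%nat -> Un_cv (seqU f (Yc c) (Yc (S c))) (h c))).
  { intros c Hc. destruct (Y2 c Hc) as [Ha Hb]. unfold h. split; intros Hbc.
    - rewrite (proj2 (Nat.eqb_eq _ _) Hbc). unfold holS.
      apply (epsilon_spec (inhabits 0) (fun l => Un_cv (seqS f (Yc c) (Yc (S c))) l)).
      apply (HE_S k A th f C0 N); auto; apply Y1; lia.
    - rewrite (proj2 (Nat.eqb_neq _ _) Hbc). unfold holU.
      apply (epsilon_spec (inhabits 0) (fun l => Un_cv (seqU f (Yc c) (Yc (S c))) l)).
      apply (HE_U k A th f C0 N); auto; apply Y1; lia. }
  assert (Y5 : forall c, (c < N)%nat -> stepW k A f N (Yc c, rho c) (Yc (S c), rho (S c))).
  { intros c Hc. destruct (Y2 c Hc) as [Ha Hb]. destruct (Hh c Hc) as [Hc1 Hc2].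
    assert (E : rho (S c) - rho c = h c) by (unfold rho; simpl; ring).
    destruct (Nat.eq_dec (beta c) 1).
    - left; apply Ws_n_iff. split; [apply Y1; lia|]. split; auto. rewrite E; auto.
    - right; apply Wu_n_iff. split; [apply Y1; lia|]. split; auto. rewrite E; auto. }
  assert (Y6 : rho N = snd q).
  { apply NNPP; intros Hne. set (e := Rabs (rho N - snd q)).
    assert (He : 0 < e) by (apply Rabs_pos_lt; lra).
    set (eta := e / (2 * (INR N + 1))).
    assert (Heta : 0 < eta) by (apply Rdiv_lt_0_compat; [lra|]; pose proof (pos_INR N); lra).
    destruct (HC_S k A th f C0 N eta Ht HL Heta) as [L1 HL1].
    destruct (HC_U k A th f C0 N eta Ht HL Heta) as [L2 HL2].
    destruct (inv_lt (e/2)) as [M HM]; [lra|].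
    destruct (Hcl (Nat.max 1 (Nat.max L1 L2)) M) as [n [Hn [Ha Hbb]]].
    assert (Hind : forall c, (c <= N)%nat -> Rabs (snd (PS n c) - rho c) <= INR c * eta).
    { induction c; intros Hc.
      - destruct (HPS n) as [H0 _]. rewrite H0. unfold rho; simpl. rewrite Rminus_diag, Rabs_R0; lra.
      - specialize (IHc ltac:(lia)). rewrite S_INR.
        assert (E : rho (S c) = rho c + h c) by (unfold rho; simpl; ring).
        assert (Hd : Rabs ((snd (PS n (S c)) - snd (PS n c)) - h c) <= eta).
        { destruct (Hh c ltac:(lia)) as [Hc1 Hc2]. destruct (Y2 c ltac:(lia)) as [Ha1 Ha2].
          destruct (Nat.eq_dec (beta c) 1) as [Hb1|Hb1].
          - assert (Hw := Hbit1 n c ltac:(rewrite Hbb; lia)). apply Ws_n_pt in Hw as [Hw1 [Hw2 Hw3]].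
            apply (HL1 (fst (PS n c)) (fst (PS n (S c))) (Yc c) (Yc (S c))).
            all: first [exact Hw1 | exact Hw2 | exact Hw3 | (apply HSFT; lia) | (apply Y1; lia) | (eapply agree_mono; [|apply Ha]; lia) | auto].
          - assert (Hw := Hbit0 n c ltac:(lia) ltac:(rewrite Hbb; lia)). apply Wu_n_pt in Hw as [Hw1 [Hw2 Hw3]].
            apply (HL2 (fst (PS n c)) (fst (PS n (S c))) (Yc c) (Yc (S c))).
            all: first [exact Hw1 | exact Hw2 | exact Hw3 | (apply HSFT; lia) | (apply Y1; lia) | (eapply agree_mono; [|apply Ha]; lia) | auto]. }
        rewrite E. replace (snd (PS n (S c)) - (rho c + h c)) with ((snd (PS n c) - rho c) + ((snd (PS n (S c)) - snd (PS n c)) - h c)) by ring.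
        eapply Rle_trans; [apply Rabs_triang|]. lra. }
    specialize (Hind N (le_n _)). destruct (HPS n) as [_ [_ [H2 _]]].
    assert (/ (INR n + 1) <= / (INR M + 1)).
    { apply Rinv_le_contravar. pose proof (pos_INR M); lra. apply Rplus_le_compat_r, le_INR; auto. }
    assert (INR N * eta < e / 2).
    { unfold eta. pose proof (pos_INR N). unfold Rdiv. 
      replace (INR N * (e * / (2 * (INR N + 1)))) with (e / 2 * (INR N / (INR N + 1))) by (field; lra).
      assert (INR N / (INR N + 1) < 1). { apply (Rmult_lt_reg_r (INR N + 1)); [lra|]. unfold Rdiv. rewrite Rmult_assoc, Rinv_l by lra. lra. }
      unfold Rdiv in *. nra. }
    assert (e <= Rabs (rho N - snd (PS n N)) + Rabs (snd (PS n N) - snd q)).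
    { unfold e. replace (rho N - snd q) with ((rho N - snd (PS n N)) + (snd (PS n N) - snd q)) by ring. apply Rabs_triang. }
    rewrite Rabs_minus_sym in Hind. lra. }
  apply HnAC. exists N. split; auto.
  assert (Hc := fun_chain k A f N (fun c => (Yc c, rho c)) N Y5). simpl in Hc.
  rewrite Y3, Y4, Y6 in Hc. unfold rho in Hc; simpl in Hc. destruct p, q; exact Hc. Qed.

Definition St := (Seq * nat * R * R)%type.
Definition CN k A (st : St) (q : Pt) : Prop :=
  let '(x, L, r, d) := st in inSFTR k A q /\ agree x (fst q) L /\ Rabs (snd q - r) <= d.
Definition InvSt k A (K : Pt -> Prop) (st : St) : Prop :=
  let '(x, L, r, d) := st in inSFT k A x /\ 0 < d /\ forall q, CN k A st q -> K q.

Fixpoint iterS (nx : nat -> St -> St) (s0 : St) (n : nat) : St :=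
  match n with O => s0 | S m => nx m (iterS nx s0 m) end.

Lemma list_bound (l : list nat) : exists M, forall i, In i l -> (i <= M)%nat.
Proof. induction l as [|a l [M HM]]. exists 0%nat; intros i []. exists (Nat.max a M); intros i [->|Hi]; [lia|]. specialize (HM i Hi); lia. Qed.

Lemma distP_fst th q q' : dtheta th (fst q) (fst q') <= distP th q q'.
Proof. unfold distP; apply Rmax_l. Qed.
Lemma distP_snd th q q' : Rabs (snd q - snd q') <= distP th q q'.
Proof. unfold distP; apply Rmax_r. Qed.

Lemma baire k A th f C0 K p : 0 < th < 1 -> LIP k A th f C0 -> is_compactP k A th K ->
  (forall q, closureP k A th (interiorP k A th K) q <-> K q) -> inSFTR k A p ->
  (forall q, K q -> AC k A f p q) -> (exists q, K q) ->
  exists N v L d, 0 < d /\ inSFTR k A v /\ forall q', inSFTR k A q' -> agree (fst v) (fst q') L ->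
     Rabs (snd q' - snd v) < d -> AC_N k A f N p q'.
Proof. intros Ht HL [HKS HK] Hcl Hp HAC [q0 Hq0]. apply NNPP; intros HnG.
  assert (Hstep : forall n st, InvSt k A K st -> exists st', InvSt k A K st' /\
     (forall q, CN k A st' q -> CN k A st q) /\ (forall q, CN k A st' q -> ~ AC_N k A f n p q)).
  { intros n [[[x L] r] d] [Hx [Hd HsK]].
    assert (Hq' : exists q', inSFTR k A q' /\ agree x (fst q') L /\ Rabs (snd q' - r) < d / 2 /\ ~ AC_N k A f n p q').
    { apply NNPP; intros H. apply HnG. exists n, (x, r), L, (d/2). split; [lra|]. split; [auto|].
      intros q' Hq' Ha Hr. apply NNPP; intros Hn. apply H; exists q'; auto. }
    destruct Hq' as [q' [Hq' [Ha [Hr HnA]]]].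
    destruct (closed_ACN k A th f C0 p n q' Ht HL Hp Hq' HnA) as [L' [d' [Hd' Hc]]].
    exists (fst q', Nat.max L L', snd q', Rmin (d'/2) (d/4)).
    assert (Hsub : forall q, CN k A (fst q', Nat.max L L', snd q', Rmin (d'/2) (d/4)) q -> CN k A (x, L, r, d) q).
    { intros q [Hq [Ha2 Hr2]]. split; auto. split. eapply agree_trans; [exact Ha|]. eapply agree_mono; [|exact Ha2]; lia.
      replace (snd q - r) with ((snd q - snd q') + (snd q' - r)) by ring.
      eapply Rle_trans; [apply Rabs_triang|]. pose proof (Rmin_r (d'/2) (d/4)). lra. }
    split; [|split; auto].
    - split; [apply Hq'|]. split. apply Rmin_glb_lt; lra. intros q Hq; apply HsK, Hsub; auto.
    - intros q [Hq [Ha2 Hr2]]. apply Hc; auto. eapply agree_mono; [|exact Ha2]; lia.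
      pose proof (Rmin_l (d'/2) (d/4)). lra. }
  assert (Hinit : exists st0, InvSt k A K st0).
  { apply Hcl in Hq0. destruct Hq0 as [_ Hq0]. destruct (Hq0 1 ltac:(lra)) as [q1 [[Hq1 [Hq1S [eps [Heps Hint]]]] _]].
    destruct (pow_small th Ht eps Heps) as [L0 HL0].
    exists (fst q1, L0, snd q1, eps / 2). split; [apply Hq1S|]. split; [lra|].
    intros q [Hq [Ha Hr]]. apply Hint; auto. unfold distP. apply Rmax_lub_lt.
    eapply Rle_lt_trans; [apply dtheta_agree; [lra|exact Ha]|exact HL0].
    rewrite Rabs_minus_sym; lra. }
  destruct Hinit as [st0 Hst0].
  set (nx := fun n st => epsilon (inhabits st) (fun st' => InvSt k A K st -> InvSt k A K st' /\
     (forall q, CN k A st' q -> CN k A st q) /\ (forall q, CN k A st' q -> ~ AC_N k A f n p q))).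
  assert (Hnx : forall n st, InvSt k A K st -> InvSt k A K (nx n st) /\
     (forall q, CN k A (nx n st) q -> CN k A st q) /\ (forall q, CN k A (nx n st) q -> ~ AC_N k A f n p q)).
  { intros n st Hst. unfold nx. apply (epsilon_spec (inhabits st) (fun st' => InvSt k A K st -> InvSt k A K st' /\
     (forall q, CN k A st' q -> CN k A st q) /\ (forall q, CN k A st' q -> ~ AC_N k A f n p q))); auto.
    destruct (Hstep n st Hst) as [st' Hst']. exists st'; auto. }
  set (sq := iterS nx st0).
  assert (Hinv : forall n, InvSt k A K (sq n)).
  { induction n; simpl; auto. apply Hnx; auto. }
  assert (Hnest : forall n m, (n <= m)%nat -> forall q, CN k A (sq m) q -> CN k A (sq n) q).
  { intros n m Hnm; induction Hnm; auto. intros q Hq. apply IHHnm. apply (Hnx m (sq m) (Hinv m)); auto. }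
  assert (Hdisj : forall n q, CN k A (sq (S n)) q -> ~ AC_N k A f n p q).
  { intros n q Hq. apply (Hnx n (sq n) (Hinv n)); auto. }
  assert (Hex : exists q, K q /\ forall n, CN k A (sq n) q).
  { apply NNPP; intros Hne.
    destruct (HK nat (fun n q => inSFTR k A q /\ ~ CN k A (sq n) q)) as [l Hl].
    - intros n. split; [tauto|]. intros q [Hq HnC].
      pose proof (Hinv n) as Hi. destruct (sq n) as [[[x L] r] d] eqn:E. destruct Hi as [Hx [Hd _]].
      destruct (classic (agree x (fst q) L)) as [Ha|Ha].
      + assert (Hr : Rabs (snd q - r) > d) by (apply Rnot_le_gt; intros Hr; apply HnC; split; auto).
        exists (Rabs (snd q - r) - d). split; [lra|]. intros q' Hq' Hdq. split; auto. intros [_ [_ Hr']].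
        pose proof (distP_snd th q q').
        assert (Rabs (snd q - r) <= Rabs (snd q - snd q') + Rabs (snd q' - r)).
        { replace (snd q - r) with ((snd q - snd q') + (snd q' - r)) by ring. apply Rabs_triang. }
        lra.
      + exists (th ^ L). split; [apply pow_lt; lra|]. intros q' Hq' Hdq. split; auto. intros [_ [Ha' _]].
        apply Ha. eapply agree_trans; [exact Ha'|]. apply agree_sym, (dtheta_small th); auto.
        eapply Rle_lt_trans; [apply distP_fst|exact Hdq].
    - intros q Hq. apply NNPP; intros Hn. apply Hne. exists q; split; auto. intros n.
      apply NNPP; intros Hc. apply Hn. exists n; split; auto.
    - destruct (list_bound l) as [M HM].
      pose proof (Hinv M) as Hi. destruct (sq M) as [[[x L] r] d] eqn:E. destruct Hi as [Hx [Hd HsK]].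
      assert (Hc : CN k A (sq M) (x, r)).
      { rewrite E. split; [apply Hx|]. split; [apply agree_refl|]. simpl. rewrite Rminus_diag, Rabs_R0; lra. }
      destruct (Hl (x, r)) as [i [Hi [_ Hni]]]. apply HsK. rewrite <- E; auto.
      apply Hni. apply Hnest with M; auto. }
  destruct Hex as [q [Hq Hall]]. destruct (AC_to_N k A f p q (HAC q Hq)) as [M HM].
  apply (Hdisj M q); auto. Qed.

Lemma local_N k A th f C0 p N0 v Lv dv q : 0 < th < 1 -> LIP k A th f C0 -> inSFTR k A p ->
  0 < dv -> inSFTR k A v -> (forall q', inSFTR k A q' -> agree (fst v) (fst q') Lv ->
     Rabs (snd q' - snd v) < dv -> AC_N k A f N0 p q') ->
  inSFTR k A q -> AC k A f p q ->
  exists Nq Lq dq, 0 < dq /\ forall q', inSFTR k A q' -> agree (fst q) (fst q') Lq ->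
     Rabs (snd q' - snd q) < dq -> AC_N k A f Nq p q'.
Proof. intros Ht HL Hp Hdv Hv Hball Hq HACq.
  destruct (AC_to_N k A f p q HACq) as [M [m [Hm Hc]]].
  assert (HAv : AC_N k A f N0 p v). { apply Hball; auto. apply agree_refl. rewrite Rminus_diag, Rabs_R0; auto. }
  destruct HAv as [m0 [Hm0 Hc0]].
  set (W := Nat.max M N0).
  assert (Hqv : chainN k A f W q (m + m0) v).
  { eapply chain_app. apply (chain_rev k A f W p m q Hp). eapply chain_mono; [|exact Hc]; unfold W; lia.
    eapply chain_mono; [|exact Hc0]; unfold W; lia. }
  destruct (shadow k A th f C0 W q (m + m0) v Ht HL Hq Hqv Lv dv Hdv) as [L [d [Hd Hsh]]].
  exists (N0 + M + N0 + W)%nat, L, d. split; auto. intros q' Hq' Ha Hr.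
  destruct (Hsh q' Hq' Ha Hr) as [v' [Hc' [Ha' Hr']]].
  destruct (Hball v') as [m1 [Hm1 Hc1]].
  { eapply chain_SFT; eauto. }
  auto. auto.
  exists (m1 + (m + m0))%nat. split; [lia|]. eapply chain_app.
  eapply chain_mono; [|exact Hc1]; unfold W; lia.
  eapply chain_mono; [|apply (chain_rev k A f W q' (m + m0) v' Hq' Hc')]; unfold W; lia. Qed.

Theorem proposition9p4
  (k : nat) (A : nat -> nat -> bool) (theta : R) (f : Seq -> R)
  (K : Pt -> Prop) (p : Pt) :
  0 < theta < 1 ->
  lipschitz_theta k A theta f ->
  is_compactP k A theta K ->
  (forall q, closureP k A theta (interiorP k A theta K) q <-> K q) ->
  inSFTR k A p ->
  (forall q, K q -> AC k A f p q) ->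
  exists N : nat, forall q, K q -> AC_N k A f N p q.
Proof. intros Ht Hlip HK Hcl Hp HAC.
  destruct (LIP_of k A theta f ltac:(lra) Hlip) as [C0 HL].
  destruct (classic (exists q, K q)) as [Hne|Hne].
  2:{ exists 0%nat. intros q Hq; exfalso; apply Hne; eauto. }
  destruct (baire k A theta f C0 K p Ht HL HK Hcl Hp HAC Hne) as [N0 [v [Lv [dv [Hdv [Hv Hball]]]]]].
  destruct HK as [HKS HKc].
  set (P := fun q (t : nat * nat * R) => K q -> 0 < snd t /\ forall q', inSFTR k A q' -> agree (fst q) (fst q') (snd (fst t)) ->
     Rabs (snd q' - snd q) < snd t -> AC_N k A f (fst (fst t)) p q').
  set (T := fun q => epsilon (inhabits (0%nat, 0%nat, 0)) (P q)).
  assert (HT : forall q, P q (T q)).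
  { intros q. apply (epsilon_spec _ (P q)). destruct (classic (K q)) as [Hq|Hq].
    - destruct (local_N k A theta f C0 p N0 v Lv dv q Ht HL Hp Hdv Hv Hball (HKS q Hq) (HAC q Hq)) as [Nq [Lq [dq [Hdq H]]]].
      exists (Nq, Lq, dq). intros _; simpl; auto.
    - exists (0%nat, 0%nat, 0). intros H; contradiction. }
  destruct (HKc Pt (fun q q' => inSFTR k A q' /\ K q /\ agree (fst q) (fst q') (snd (fst (T q))) /\ Rabs (snd q' - snd q) < snd (T q))) as [l Hl].
  - intros q. split; [tauto|]. intros q' [Hq' [Hq [Ha Hr]]].
    destruct (HT q Hq) as [Hd _].
    exists (Rmin (theta ^ (snd (fst (T q)))) (snd (T q) - Rabs (snd q' - snd q))). split.
    apply Rmin_glb_lt; [apply pow_lt; lra|lra].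
    intros q'' Hq'' Hdist. split; auto. split; auto. split.
    + eapply agree_trans; [exact Ha|]. apply (dtheta_small theta); auto.
      eapply Rle_lt_trans; [apply distP_fst|]. eapply Rlt_le_trans; [exact Hdist|apply Rmin_l].
    + pose proof (distP_snd theta q' q''). pose proof (Rmin_r (theta ^ (snd (fst (T q)))) (snd (T q) - Rabs (snd q' - snd q))).
      assert (Rabs (snd q'' - snd q) <= Rabs (snd q' - snd q'') + Rabs (snd q' - snd q)).
      { replace (snd q'' - snd q) with (- (snd q' - snd q'') + (snd q' - snd q)) by ring.
        eapply Rle_trans; [apply Rabs_triang|]. rewrite Rabs_Ropp; lra. }
      lra.
  - intros q Hq. exists q. destruct (HT q Hq) as [Hd _]. split; [apply HKS; auto|]. split; auto. split.
    apply agree_refl. rewrite Rminus_diag, Rabs_R0; auto.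
  - destruct (list_bound (map (fun q => fst (fst (T q))) l)) as [N HN].
    exists N. intros q' Hq'. destruct (Hl q' Hq') as [q [Hin [Hq'S [Hq [Ha Hr]]]]].
    destruct (HT q Hq) as [_ H]. apply AC_N_mono with (fst (fst (T q))).
    apply HN. apply (in_map (fun q => fst (fst (T q)))); auto. apply H; auto. Qed.
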